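(* Let $\lambda,\mu$ be partitions with $\mu\subseteq\lambda$ and $\lambda/\mu$ a horizontal strip (i.e. $\lambda_{i+1}\le\mu_i\le\lambda_i$ for all $i\ge1$), and let $N\in\mathfrak{gl}_n(\Bbbk)$ be nilpotent with $\mathrm{JF}(N)=\lambda$. Then there is a bijection $$\{V\subseteq\Bbbk^n: N(\Bbbk^n)\subseteq V,\ \mathrm{JF}(N|_V)=\mu\}\;\cong\;\prod_{1\le i<j}\Bbbk^{(\lambda_i-\mu_i)(\mu_j-\lambda_{j+1})}\times\prod_{i\ge1}\mathrm{Gr}_{\mu_i-\lambda_{i+1},\,\lambda_i-\lambda_{i+1}}.$$
   Context: $\Bbbk$ any field. For a nilpotent endomorphism $N$, $\mathrm{JF}(N)$ is the partition $\lambda$ with $\lambda_1+\cdots+\lambda_i=\dim\ker N^i$ for all $i$ (the conjugate of the Jordan block size partition). If $N(\Bbbk^n)\subseteq V$ then $V$ is $N$-stable so $N|_V$ makes sense. $\mathrm{Gr}_{m,a}$ denotes the set of $m$-dimensional subspaces of $\Bbbk^a$. *)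

(* Defs.v *)
From HB Require Import structures.
From mathcomp Require Import all_boot all_order all_algebra.
Set Implicit Arguments. Unset Strict Implicit. Unset Printing Implicit Defensive.
Import GRing.Theory.
Local Open Scope ring_scope.

(* Conventions: k^n is the space of row vectors 'rV[F]_n; the endomorphism   *)
(* N : 'M[F]_n acts by v |-> v *m N.  A subspace of k^n is represented by    *)
(* its canonical row-space matrix, i.e. a V : 'M[F]_n with <<V>>%MS = V.     *)
(* Partitions are functions nat -> nat, 0-indexed: lam i = lambda_(i+1).     *)

Definition is_partition (l : nat -> nat) : Prop :=
  (forall i, (l i.+1 <= l i)%N) /\ exists m, forall i, (m <= i)%N -> l i = 0%N.

Definition is_subspace {F : fieldType} {n : nat} (V : 'M[F]_n) : bool :=
  (<<V>>%MS == V).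

(* JF of the restriction N|_V, for an N-stable subspace V:                   *)
(* mu_1 + ... + mu_i = dim ker (N|_V)^i = dim (V /\ ker N^i) for all i.      *)
Definition JF_restr {F : fieldType} {n : nat} (N V : 'M[F]_n) (mu : nat -> nat)
  : Prop :=
  forall i : nat, (\sum_(k < i) mu k)%N = \rank (V :&: kermx (N ^+ i))%MS.

Definition JF {F : fieldType} {n : nat} (N : 'M[F]_n) (lam : nat -> nat) : Prop :=
  forall i : nat, (\sum_(k < i) lam k)%N = \rank (kermx (N ^+ i)).

Definition Gr (F : fieldType) (m a : nat) : Type :=
  {V : 'M[F]_a | is_subspace V && (\rank V == m)}.

Definition SubspSet (F : fieldType) (n : nat) (N : 'M[F]_n) (mu : nat -> nat) : Type :=
  {V : 'M[F]_n | is_subspace V /\ ((N <= V)%MS /\ JF_restr N V mu)}.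

(* The right-hand side: factors with index >= n are trivial (singletons),   *)
(* since JF(N) = lam forces lam i = 0 (hence mu i = 0) for i >= n.           *)
Definition ProdSet (F : fieldType) (n : nat) (lam mu : nat -> nat) : Type :=
  ((forall p : {p : 'I_n * 'I_n | (p.1 < p.2)%N},
      'rV[F]_((lam (sval p).1 - mu (sval p).1) * (mu (sval p).2 - lam (sval p).2.+1)))
   * (forall i : 'I_n, Gr F (mu i - lam i.+1) (lam i - lam i.+1)))%type.

(* Main.v *)
Require Import Defs.
From HB Require Import structures.
From mathcomp Require Import all_boot all_order all_algebra.
From mathcomp Require Import zify.
From Stdlib Require Import ProofIrrelevance FunctionalExtensionality ClassicalEpsilon.
Set Implicit Arguments. Unset Strict Implicit. Unset Printing Implicit Defensive.
Import GRing.Theory.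
Local Open Scope ring_scope.

Definition equip (A B : Type) : Prop := exists f : A -> B, bijective f.

Lemma equip_refl A : equip A A.
Proof. by exists id; exists id. Qed.

Lemma equip_sym A B : equip A B -> equip B A.
Proof. by case=> f [g fg gf]; exists g; exists f. Qed.

Lemma equip_trans A B C : equip A B -> equip B C -> equip A C.
Proof. by case=> f bf [g bg]; exists (g \o f); apply: bij_comp. Qed.

Lemma equip_prod A A' B B' : equip A A' -> equip B B' -> equip (A * B) (A' * B').
Proof.
case=> f [f' ff f'f] [g [g' gg g'g]].
exists (fun p => (f p.1, g p.2)); exists (fun p => (f' p.1, g' p.2)).
  by case=> a b /=; rewrite ff gg.
by case=> a b /=; rewrite f'f g'g.
Qed.

Lemma equip_prodC A B : equip (A * B) (B * A).
Proof. by exists (fun p => (p.2, p.1)); exists (fun p => (p.2, p.1)); case. Qed.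

Lemma equip_prodA A B C : equip ((A * B) * C) (A * (B * C)).
Proof.
exists (fun p => (p.1.1, (p.1.2, p.2))); exists (fun p => ((p.1, p.2.1), p.2.2)).
  by case=> [[]]. by case=> ? [].
Qed.

Lemma equip_unitl A : equip (unit * A) A.
Proof. by exists snd; exists (fun a => (tt, a)) => [[[]]|]. Qed.

Lemma choice_bij (B : Type) (P : B -> Type) (C : B -> Type) :
  (forall b, equip (P b) (C b)) ->
  exists f : forall b, P b -> C b, exists g : forall b, C b -> P b,
    forall b, cancel (f b) (g b) /\ cancel (g b) (f b).
Proof.
move=> h.
have h' : forall b, {fg : (P b -> C b) * (C b -> P b) | cancel fg.1 fg.2 /\ cancel fg.2 fg.1}.
  move=> b; apply: constructive_indefinite_description.
  by case: (h b) => f [g ? ?]; exists (f, g).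
exists (fun b => (sval (h' b)).1), (fun b => (sval (h' b)).2).
by move=> b; case: (h' b).
Qed.

Lemma equip_sigma (B C : Type) (P : B -> Type) :
  (forall b, equip (P b) C) -> equip {b : B & P b} (B * C).
Proof.
move=> /(@choice_bij _ _ (fun _ => C)) [f [g fg]].
exists (fun s => (projT1 s, f (projT1 s) (projT2 s))).
exists (fun p => existT _ p.1 (g p.1 p.2)).
  by case=> b p /=; rewrite (proj1 (fg b)).
by case=> b c /=; rewrite (proj2 (fg b)).
Qed.

Lemma equip_fib T U (P : T -> Prop) (Q : U -> Prop) (g : T -> U)
  (hg : forall x, P x -> Q (g x)) :
  equip {x | P x} {y : {y | Q y} & {x | P x /\ g x = proj1_sig y}}.
Proof.
exists (fun x => existT _ (exist _ (g (sval x)) (hg _ (svalP x)))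
                  (exist _ (sval x) (conj (svalP x) erefl))).
exists (fun s => exist _ (sval (projT2 s)) (proj1 (svalP (projT2 s)))).
  by case=> x px /=; congr exist; apply: proof_irrelevance.
case=> [[y qy] [x [px e]]] /=.
move: qy e; rewrite /= => qy e; subst y.
set q1 := hg x _. clearbody q1.
have E : q1 = qy by apply: proof_irrelevance.
subst q1. apply: f_equal. apply: f_equal. apply: proof_irrelevance.
Qed.

Lemma equip_sig_iff T (P Q : T -> Prop) : (forall x, P x <-> Q x) -> equip {x | P x} {x | Q x}.
Proof.
move=> h; exists (fun x => exist _ (sval x) (proj1 (h _) (svalP x))).
exists (fun x => exist _ (sval x) (proj2 (h _) (svalP x))).
  by case=> x p; congr exist; apply: proof_irrelevance.
by case=> x p; congr exist; apply: proof_irrelevance.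
Qed.

Lemma equip_pi (I : Type) (A B : I -> Type) : (forall i, equip (A i) (B i)) ->
  equip (forall i, A i) (forall i, B i).
Proof.
move=> /choice_bij [f [g fg]].
exists (fun a i => f i (a i)); exists (fun b i => g i (b i)).
  by move=> a; apply: functional_extensionality_dep => i; rewrite (proj1 (fg i)).
by move=> a; apply: functional_extensionality_dep => i; rewrite (proj2 (fg i)).
Qed.

Lemma equip_pi_prod (I : Type) (A B : I -> Type) :
  equip (forall i, A i * B i) ((forall i, A i) * (forall i, B i)).
Proof.
exists (fun f => (fun i => (f i).1, fun i => (f i).2)).
exists (fun p i => (p.1 i, p.2 i)).
  by move=> f; apply: functional_extensionality_dep => i /=; case: (f i).
by case=> a b; reflexivity.
Qed.

Lemma dep_ord_eq m (A : nat -> Type) (f : forall i : 'I_m, A i) i (h1 h2 : (i < m)%N) :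
  f (Ordinal h1) = f (Ordinal h2).
Proof. by rewrite (bool_irrelevance h1 h2). Qed.

Lemma last_eq m (i : 'I_m.+1) : (m <= i)%N -> m = i.
Proof. by move=> h; apply/eqP; rewrite eqn_leq h -ltnS ltn_ord. Qed.

Lemma ecast_ord m (A : nat -> Type) (f : forall i : 'I_m, A i) (j : 'I_m) (i : nat)
  (hi : (i < m)%N) (e : nat_of_ord j = i) : ecast k (A k) e (f j) = f (Ordinal hi).
Proof. by case: i / e hi => hi /=; case: j hi => j hj hi /=; apply: dep_ord_eq. Qed.

Definition ext_last m (A : nat -> Type) (f : forall i : 'I_m, A i) (a : A m)
  (i : 'I_m.+1) : A i :=
  match ltnP i m with
  | LtnNotGeq h => f (Ordinal h)
  | GeqNotLtn h => ecast k (A k) (last_eq h) a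
  end.

Lemma equip_pi_last m (A : nat -> Type) :
  equip (forall i : 'I_m.+1, A i) ((forall i : 'I_m, A i) * A m).
Proof.
exists (fun f => (fun i : 'I_m => f (widen_ord (leqnSn m) i), f ord_max)).
exists (fun p => ext_last p.1 p.2).
  move=> f; apply: functional_extensionality_dep => i; rewrite /ext_last /=.
  case: ltnP => h.
    by case: i h => i hi h /=; apply: dep_ord_eq.
  case: i h => i hi h /=; exact: (@ecast_ord m.+1 A f ord_max i hi (last_eq h)).
case=> f a /=; congr pair.
  apply: functional_extensionality_dep => i; rewrite /ext_last /=.
  case: ltnP => h; last by have := ltn_ord i; rewrite ltnNge h.
  by case: i h => i hi h /=; apply: dep_ord_eq.
rewrite /ext_last /=; case: ltnP => h; first by have := h; rewrite ltnn.
by rewrite (eq_irrelevance (@last_eq m ord_max h) erefl).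
Qed.

Lemma inj_surj_bij A B (f : A -> B) : injective f -> (forall y, exists x, f x = y) -> bijective f.
Proof.
move=> inj sur.
have g : forall y, {x | f x = y} by move=> y; apply: constructive_indefinite_description.
exists (fun y => sval (g y)).
  by move=> x; apply: inj; case: (g (f x)).
by move=> y; case: (g y).
Qed.

Lemma sig_eq T (P : T -> Prop) (u v : {x | P x}) : sval u = sval v -> u = v.
Proof.
case: u v => x px [y py] /= e; subst y; congr exist; apply: proof_irrelevance.
Qed.

Lemma compl_ex (F : fieldType) n (A B : 'M[F]_n) k : (A <= B)%MS ->
  (\rank B - \rank A)%N = k ->
  exists C : 'M[F]_(k, n),
    [/\ row_free C, (C :&: A)%MS = 0 & (C + A == B)%MS].
Proof.
move=> sAB <-; set D := (B :\: A)%MS.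
have DA0 : (D :&: A)%MS = 0 by apply: capmx_diff.
have DAB : (D + A :=: B)%MS.
  apply: eqmx_trans (addsmx_diff_cap_eq B A).
  by apply: adds_eqmx => //; apply: eqmx_sym; apply/capmx_idPr.
have rD : \rank D = (\rank B - \rank A)%N.
  have := mxrank_sum_cap D A; rewrite DA0 mxrank0 addn0 DAB => ->.
  by rewrite addnK.
rewrite -rD; exists (row_base D); split.
- exact: row_base_free.
- by apply/eqP; rewrite -submx0 (cap_eqmx (eq_row_base D) (eqmx_refl A)) DA0 submx_refl.
- by apply/eqmxP; apply: eqmx_trans (adds_eqmx (eq_row_base D) (eqmx_refl A)) DAB.
Qed.

Lemma row_free_of (F : fieldType) d n (A : 'M[F]_(d, n)) :
  (forall w : 'rV_d, w *m A = 0 -> w = 0) -> row_free A.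
Proof.
move=> h; rewrite -kermx_eq0; apply/eqP/row_matrixP => i.
by rewrite row0; apply: h; apply/sub_kermxP; apply: row_sub.
Qed.

Definition bas (F : fieldType) d g (X : 'M[F]_g) : 'M[F]_(d, g) := pid_mx d *m row_ebase X.

Lemma bas_ok (F : fieldType) d g (X : 'M[F]_g) : \rank X = d ->
  row_free (bas d X) /\ (bas d X :=: X)%MS.
Proof. by move=> <-; split; [exact: row_base_free | exact: eq_row_base]. Qed.

Lemma sub0_eq (F : fieldType) m n p q (Y : 'M[F]_(m, n)) (A : 'M[F]_(p, n)) (B : 'M[F]_(q, n)) :
  (Y <= A)%MS -> (Y <= B)%MS -> (A :&: B)%MS = 0 -> Y = 0.
Proof.
by move=> hA hB h0; apply/eqP; rewrite -submx0 -h0 sub_capmx hA hB.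
Qed.

Lemma sub_addl (F : fieldType) m n p (Y Z : 'M[F]_(m, n)) (G : 'M[F]_(p, n)) :
  ((Y + Z)%R <= G)%MS -> (Z <= G)%MS -> (Y <= G)%MS.
Proof.
move=> h1 h2; have -> : Y = (Y + Z) + (- Z) by rewrite addrK.
by apply: addmx_sub => //; rewrite eqmx_opp.
Qed.

Lemma coord_ex (F : fieldType) n g (bC : 'M[F]_(g, n)) (G' : 'M[F]_n) :
  row_free bC -> (bC :&: G')%MS = 0 ->
  exists PC : 'M[F]_(n, g),
    (forall p (Y : 'M_(p, g)) (Z : 'M_(p, n)), (Z <= G')%MS -> (Y *m bC + Z) *m PC = Y).
Proof.
move=> fC C0.
have C0' : (<<bC>> :&: <<G'>>)%MS = 0 :> 'M_n.
  apply/eqP; rewrite -submx0 (cap_eqmx (genmxE bC) (genmxE G')) C0 submx_refl //.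
exists (proj_mx <<bC>>%MS <<G'>>%MS *m pinvmx bC) => p Y Z hZ.
rewrite mulmxA mulmxDl (proj_mx_id C0') ?genmxE ?submxMl //.
rewrite (proj_mx_0 C0') ?genmxE // addr0.
have : bC *m pinvmx bC = 1%:M.
  by apply: (row_free_inj fC); rewrite mul1mx mulmxKpV.
by rewrite -mulmxA => ->; rewrite mulmx1.
Qed.

Lemma coord0 (F : fieldType) n g (bC : 'M[F]_(g, n)) (G' : 'M[F]_n) (PC : 'M[F]_(n, g)) :
  (forall p (Y : 'M_(p, g)) (Z : 'M_(p, n)), (Z <= G')%MS -> (Y *m bC + Z) *m PC = Y) ->
  forall p (Z : 'M_(p, n)), (Z <= G')%MS -> Z *m PC = 0.
Proof. by move=> h p Z hZ; have := h p 0 Z hZ; rewrite mul0mx add0r. Qed.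

Definition FibP (F : fieldType) n (V' G' G : 'M[F]_n) (c d : nat) (V : 'M[F]_n) : Prop :=
  is_subspace V /\ [/\ (V <= G)%MS, (V :&: G' == V')%MS & \rank V = (c + d)%N].
Definition Fib (F : fieldType) n (V' G' G : 'M[F]_n) (c d : nat) :=
  {V : 'M[F]_n | FibP V' G' G c d V}.

Lemma rkGr (F : fieldType) d g (X : Gr F d g) : \rank (sval X) = d.
Proof. by case: X => X /= /andP [_ /eqP]. Qed.

Lemma subGr (F : fieldType) d g (X : Gr F d g) : <<sval X>>%MS = sval X.
Proof. by case: X => X /= /andP [/eqP]. Qed.

Lemma core (F : fieldType) n (V' G' G : 'M[F]_n) (c a g d : nat) :
  (V' <= G')%MS -> (G' <= G)%MS -> \rank V' = c -> \rank G' = a -> \rank G = (a + g)%N ->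
  equip (Gr F d g * 'rV[F]_(d * (a - c))) (Fib V' G' G c d).
Proof.
move=> sVG' sG'G rV' rG' rG.
have [bC [fC C0 CG]] := compl_ex sG'G (etrans (congr2 subn rG rG') (addKn a g)).
have [bB [fB B0 BG']] := compl_ex sVG' (congr2 subn rG' rV').
have [PC hPC] := coord_ex fC C0.
have PC0 := coord0 hPC.
have sCG : (bC <= G)%MS by rewrite -(eqmxP CG) addsmxSl.
have sBG' : (bB <= G')%MS by rewrite -(eqmxP BG') addsmxSl.
have BVC0 : (bB :&: (V' + bC))%MS = 0.
  apply: sub0_eq (capmxSl _ _) _ B0.
  have := capmxSr bB (V' + bC)%MS; case/sub_addsmxP => u hu.
  have h1 : (u.2 *m bC <= G')%MS.
    apply: (@sub_addl _ _ _ _ _ (u.1 *m V')); first by rewrite addrC -hu (submx_trans (capmxSl _ _)).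
    by rewrite (submx_trans (submxMl _ _)).
  have h2 : u.2 *m bC = 0 by apply: sub0_eq (submxMl _ _) h1 C0.
  by rewrite hu h2 addr0 submxMl.
have [PB hPB] := coord_ex fB BVC0.
have PB0 := coord0 hPB.
pose W (X : 'M[F]_g) (M : 'rV[F]_(d * (a - c))) : 'M_(d, n) :=
  bas d X *m bC + vec_mx M *m bB.
have WPC : forall X M, W X M *m PC = bas d X.
  by move=> X M; rewrite hPC // (submx_trans (submxMl _ _)).
have WPB : forall X M, W X M *m PB = vec_mx M.
  move=> X M; rewrite /W addrC hPB //.
  by rewrite (submx_trans (submxMl _ _)) // addsmxSr.
have sV'G : (V' <= G)%MS by apply: submx_trans sG'G.
have sWG : forall X M, (W X M <= G)%MS.
  move=> X M; apply: addmx_sub; first by rewrite (submx_trans (submxMl _ _)).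
  by rewrite (submx_trans (submxMl _ _)) // (submx_trans sBG').
have Wfree : forall X M, \rank X = d -> forall p (w : 'M_(p, d)), (w *m W X M <= G')%MS -> w = 0.
  move=> X M rX p w hw; have [fX _] := bas_ok rX.
  apply: (row_free_inj fX); rewrite mul0mx.
  by rewrite -(WPC X M) mulmxA PC0.
have capW0 : forall X M, \rank X = d -> forall p (Y : 'M_(p, n)), (Y <= W X M)%MS -> (Y <= G')%MS -> Y = 0.
  move=> X M rX p Y /submxP [D ->] hY.
  by rewrite (Wfree X M rX p D hY) mul0mx.
have rW : forall X M, \rank X = d -> \rank (W X M) = d.
  move=> X M rX; apply/eqP; apply: row_free_of => w hw.
  by apply: (Wfree X M rX); rewrite hw sub0mx.
have valid : forall X M, \rank X = d ->
  FibP V' G' G c d <<(V' + W X M)%MS>>%MS.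
  move=> X M rX; rewrite /FibP; split; first by rewrite /is_subspace genmx_id.
  split.
  - by rewrite genmxE addsmx_sub sV'G sWG.
  - apply/eqmxP; apply: eqmx_trans (cap_eqmx (genmxE _) (eqmx_refl G')) _.
    apply: eqmx_trans (eqmx_sym (matrix_modl _ sVG')) _.
    have -> : (W X M :&: G')%MS = 0 by apply: (capW0 X M rX); [apply: capmxSl | apply: capmxSr].
    exact: addsmx0.
  - rewrite mxrank_gen mxrank_disjoint_sum ?rV' ?rW //.
    apply: (capW0 X M rX); first by apply: capmxSr.
    exact: submx_trans (capmxSl _ _) sVG'.
pose Phi (p : Gr F d g * 'rV[F]_(d * (a - c))) : Fib V' G' G c d :=
  exist _ _ (valid (sval p.1) p.2 (rkGr p.1)).
exists Phi; apply: inj_surj_bij.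
  case=> X1 M1 [X2 M2] /(congr1 sval) /= /genmxP e12.
  have rX1 := rkGr X1; have rX2 := rkGr X2.
  have [fX1 eX1] := bas_ok rX1; have [fX2 eX2] := bas_ok rX2.
  have s12 : (W (sval X1) M1 <= V' + W (sval X2) M2)%MS.
    by rewrite -(eqmxP e12) addsmxSr.
  have s21 : (W (sval X2) M2 <= V' + W (sval X1) M1)%MS.
    by rewrite (eqmxP e12) addsmxSr.
  case/sub_addsmxP: s12 => u hu; case/sub_addsmxP: s21 => u' hu'.
  have V'PC : forall p (D : 'M_(p, n)), D *m V' *m PC = 0.
    by move=> p D; rewrite PC0 // (submx_trans (submxMl _ _)).
  have V'PB : forall p (D : 'M_(p, n)), D *m V' *m PB = 0.
    by move=> p D; rewrite PB0 // (submx_trans (submxMl _ _)) // addsmxSl.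
  have b1 : bas d (sval X1) = u.2 *m bas d (sval X2).
    by rewrite -(WPC _ M1) hu mulmxDl V'PC add0r -mulmxA WPC.
  have b2 : bas d (sval X2) = u'.2 *m bas d (sval X1).
    by rewrite -(WPC _ M2) hu' mulmxDl V'PC add0r -mulmxA WPC.
  have m1 : vec_mx M1 = u.2 *m vec_mx M2.
    by rewrite -(WPB (sval X1) M1) hu mulmxDl V'PB add0r -mulmxA WPB.
  have eX : X1 = X2.
    apply: val_inj; change (sval X1 = sval X2); rewrite -(subGr X1) -(subGr X2); apply/genmxP.
    apply/eqmxP; apply: eqmx_trans (eqmx_sym eX1) _; apply: eqmx_trans _ eX2.
    apply/eqmxP; apply/andP; split.
      by rewrite b1 submxMl.
    by rewrite b2 submxMl.
  subst X2.
  have u1 : u.2 = 1%:M.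
    by apply: (row_free_inj fX1); rewrite mul1mx -b1.
  by rewrite -[M1]vec_mxK m1 u1 mul1mx vec_mxK.
case=> V hV0; have [hV [sVG eVG' rV]] := hV0.
suff [x ex] : exists x, sval (Phi x) = V.
  by exists x; apply: sig_eq.
have sV'V : (V' <= V)%MS.
  by rewrite -(eqmxP eVG') capmxSl.
have [bY [fY Y0 YV]] := compl_ex sV'V (etrans (congr2 subn rV rV') (addKn c d)).
have sYV : (bY <= V)%MS by rewrite -(eqmxP YV) addsmxSl.
have : (bY <= bC + G')%MS by rewrite (eqmxP CG) (submx_trans sYV).
case/sub_addsmxP => u hu.
have : (u.2 *m G' <= bB + V')%MS by rewrite (eqmxP BG') submxMl.
case/sub_addsmxP => v hv.
set R := u.1.
have fR : row_free R.
  apply: row_free_of => w hw.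
  apply: (row_free_inj fY); rewrite mul0mx.
  apply: sub0_eq (submxMl _ _) _ Y0.
  rewrite -(eqmxP eVG') sub_capmx (submx_trans (submxMl _ _)) //=.
  by rewrite hu mulmxDr mulmxA hw mul0mx add0r mulmxA submxMl.
pose X := <<R>>%MS.
have rX : \rank X = d by rewrite mxrank_gen; apply/eqP.
have XGr : is_subspace X && (\rank X == d) by apply/andP; split; [rewrite /is_subspace genmx_id | rewrite rX].
have [fX eX] := bas_ok rX.
have : (bas d X <= R)%MS by rewrite eX genmxE.
case/submxP => T eT.
pose M := mxvec (T *m v.1).
exists (exist _ X XGr, M) => /=.
have eW : W X M = T *m bY - T *m v.2 *m V'.
  rewrite /W /M mxvecK eT hu hv !mulmxDr !mulmxA addrA addrK //.
have sW : (V' + W X M <= V)%MS.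
  rewrite addsmx_sub sV'V eW addmx_sub ?(submx_trans (submxMl _ _)) //.
  by rewrite eqmx_opp (submx_trans (submxMl _ _)).
have [_ [_ _ rG0]] := valid X M rX; rewrite mxrank_gen in rG0.
have : (V' + W X M == V)%MS by rewrite -(mxrank_leqif_eq sW).2 rG0 rV.
move/genmxP => ->; by move/eqP: hV.
Qed.

Lemma kerS (F : fieldType) n (N : 'M[F]_n) i j : (i <= j)%N ->
  (kermx (N ^+ i) <= kermx (N ^+ j))%MS.
Proof.
move=> hij; apply/sub_kermxP; rewrite -(subnKC hij) exprD mulmxA.
by rewrite mulmx_ker mul0mx.
Qed.

Lemma capKN (F : fieldType) n (N : 'M[F]_n) i :
  (kermx (N ^+ i) :&: N :=: kermx (N ^+ i.+1) *m N)%MS.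
Proof.
apply/eqmxP/andP; split.
  have : (kermx (N ^+ i) :&: N <= N)%MS by apply: capmxSr.
  case/submxP => D eD; rewrite eD submxMr //; apply/sub_kermxP.
  have : (kermx (N ^+ i) :&: N <= kermx (N ^+ i))%MS by apply: capmxSl.
  by rewrite eD => /sub_kermxP; rewrite exprS mulmxA.
rewrite sub_capmx submxMl andbT; apply/sub_kermxP; rewrite -mulmxA.
have -> : N *m N ^+ i = N ^+ i.+1 by rewrite exprS.
by rewrite mulmx_ker.
Qed.

Lemma rank_capKN (F : fieldType) n (N : 'M[F]_n) i :
  (\rank (kermx (N ^+ i) :&: N) + \rank (kermx (N ^+ 1)) = \rank (kermx (N ^+ i.+1)))%N.
Proof.
rewrite (capKN N i) -(mxrank_mul_ker (kermx (N ^+ i.+1)) N); congr addn.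
have /capmx_idPr -> : (kermx (N ^+ 1) <= kermx (N ^+ i.+1))%MS by apply: kerS.
by rewrite expr1.
Qed.

Lemma rank_mod (F : fieldType) n (N V K : 'M[F]_n) : (N <= V)%MS ->
  (\rank (V :&: (K + N)) + \rank (K :&: N) = \rank (V :&: K) + \rank N)%N.
Proof.
move=> sNV.
have e1 : (V :&: (K + N) :=: N + K :&: V)%MS.
  by rewrite capmxC addsmxC; apply: eqmx_sym; apply: matrix_modl.
have e2 : (N :&: (K :&: V) :=: K :&: N)%MS.
  rewrite capmxA [(K :&: N)%MS]capmxC; apply/capmx_idPl.
  exact: submx_trans (capmxSl _ _) sNV.
by rewrite e1 -e2 mxrank_sum_cap addnC capmxC.
Qed.

Definition Gm (F : fieldType) n (N : 'M[F]_n) (i : nat) : 'M[F]_n := (kermx (N ^+ i) + N)%MS.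
Definition cc n (lam mu : nat -> nat) i := (n - lam 0 + \sum_(k < i) (mu k - lam k.+1))%N.
Definition ee (lam mu : nat -> nat) i := (\sum_(k < i) (lam k - mu k))%N.
Definition SP (F : fieldType) n (N : 'M[F]_n) lam mu i (V : 'M[F]_n) : Prop :=
  is_subspace V /\ [/\ (V <= Gm N i)%MS, (N <= V)%MS &
                       forall j, (j <= i)%N -> \rank (V :&: Gm N j) = cc n lam mu j].
Definition Xf (F : fieldType) (lam mu : nat -> nat) i :=
  (Gr F (mu i - lam i.+1) (lam i - lam i.+1) * 'rV[F]_((mu i - lam i.+1) * ee lam mu i))%type.

Lemma GmS (F : fieldType) n (N : 'M[F]_n) i j : (j <= i)%N -> (Gm N j <= Gm N i)%MS.
Proof. by move=> h; rewrite /Gm addsmxS // kerS. Qed.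

Lemma NGm (F : fieldType) n (N : 'M[F]_n) i : (N <= Gm N i)%MS.
Proof. exact: addsmxSr. Qed.

Lemma ccS n lam mu i : cc n lam mu i.+1 = (cc n lam mu i + (mu i - lam i.+1))%N.
Proof. by rewrite /cc big_ord_recr /= addnA. Qed.

Lemma step (F : fieldType) n (N : 'M[F]_n) lam mu i
  (hrank : forall j, \rank (Gm N j) = (n - lam j)%N)
  (hle : forall j, (lam j.+1 <= lam j <= n)%N)
  (hce : forall j, (cc n lam mu j + ee lam mu j)%N = (n - lam j)%N) :
  equip {V | SP N lam mu i.+1 V} ({V | SP N lam mu i V} * Xf F lam mu i).
Proof.
have gP : forall V, SP N lam mu i.+1 V -> SP N lam mu i <<(V :&: Gm N i)%MS>>%MS.
  move=> V [sV [sVG sNV hr]]; split; first by rewrite /is_subspace genmx_id.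
  split.
  - by rewrite genmxE capmxSr.
  - by rewrite genmxE sub_capmx sNV NGm.
  - move=> j hj; rewrite -(hr j (leqW hj)).
    apply/eqmx_rank/eqmxP.
    apply: eqmx_trans (cap_eqmx (genmxE _) (eqmx_refl _)) _.
    rewrite -capmxA; apply: cap_eqmx => //; apply/capmx_idPr; exact: GmS.
apply: equip_trans (equip_fib gP) _.
apply: equip_sigma => -[y hy].
have [sy [syG sNy hry]] := hy.
apply: equip_trans (equip_sig_iff (Q := FibP y (Gm N i) (Gm N i.+1) (cc n lam mu i) (mu i - lam i.+1)) _) _.
  move=> x; split.
    case=> -[sx [sxG sNx hrx]] /= ex; split=> //; split=> //.
      by rewrite -ex; apply/eqmxP; apply: eqmx_sym; apply: genmxE.
    rewrite -ccS -(hrx i.+1 (leqnn _)); apply/eqmx_rank/eqmxP; apply: eqmx_sym.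
    exact/capmx_idPl.
  case=> sx [sxG ex rx].
  have syx : (y <= x)%MS by rewrite -(eqmxP ex) capmxSl.
  split; last first.
    change (<<(x :&: Gm N i)%MS>>%MS = y).
    by move/eqP: (sy) => <-; apply/genmxP.
  split=> //; split=> //.
    exact: submx_trans syx.
  move=> j; rewrite leq_eqVlt => /orP [/eqP ->|hj].
    rewrite ccS -rx; apply/eqmx_rank/eqmxP; exact/capmx_idPl.
  rewrite -(hry j hj); apply/eqmx_rank/eqmxP.
  have e1 : (x :&: Gm N j :=: (x :&: Gm N i) :&: Gm N j)%MS.
    rewrite -capmxA; apply: cap_eqmx => //; apply: eqmx_sym; apply/capmx_idPr; exact: GmS.
  apply: eqmx_trans e1 _; apply: cap_eqmx => //; exact/eqmxP.
apply: equip_sym.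
have ea : (n - lam i - cc n lam mu i)%N = ee lam mu i by have := hce i; lia.
rewrite /Xf -ea.
apply: core => //.
- exact: GmS.
- by rewrite -(hry i (leqnn i)); apply/eqmx_rank/eqmxP; apply: eqmx_sym; apply/capmx_idPl.
- by rewrite hrank; have := hle i; lia.
Qed.

Lemma equip_single A B (a : A) (b : B) :
  (forall x, x = a) -> (forall y, y = b) -> equip A B.
Proof. by move=> ha hb; exists (fun _ => b); exists (fun _ => a). Qed.

Lemma pi0_single (A : 'I_0 -> Type) (f g : forall j, A j) : f = g.
Proof. by apply: functional_extensionality_dep => -[]. Qed.

Lemma equip_rV_add (F : fieldType) p q :
  equip 'rV[F]_(p + q) ('rV[F]_p * 'rV[F]_q).
Proof.
exists (fun x => (lsubmx x, rsubmx x)); exists (fun y => row_mx y.1 y.2).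
  by move=> x /=; rewrite hsubmxK.
by case=> a b /=; rewrite row_mxKl row_mxKr.
Qed.

Lemma equip_rV_sum (F : fieldType) (d : nat) (f : nat -> nat) i :
  equip 'rV[F]_(d * \sum_(j < i) f j) (forall j : 'I_i, 'rV[F]_(f j * d)).
Proof.
elim: i => [|i IH].
  rewrite big_ord0 muln0.
  have f0 : forall j : 'I_0, 'rV[F]_(f j * d) by case.
  by apply: (equip_single (a := 0) (b := f0)) => [x|y]; [apply: thinmx0 | apply: pi0_single].
rewrite big_ord_recr /= mulnDr.
apply: equip_trans (equip_rV_add _ _ _) _.
apply: equip_trans _ (equip_sym (equip_pi_last i (fun j => 'rV[F]_(f j * d)))).
apply: equip_prod => //; rewrite mulnC; exact: equip_refl.
Qed.

Lemma equip_pairs n (h : nat -> nat -> nat) (T : nat -> Type) :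
  equip (forall i : 'I_n, forall j : 'I_i, T (h j i))
        (forall p : {p : 'I_n * 'I_n | (p.1 < p.2)%N}, T (h (sval p).1 (sval p).2)).
Proof.
exists (fun f p => f (sval p).2 (Ordinal (svalP p))).
exists (fun g (i : 'I_n) (j : 'I_i) =>
          g (exist (fun p : 'I_n * 'I_n => (p.1 < p.2)%N)
                   (widen_ord (ltnW (ltn_ord i)) j, i) (ltn_ord j))).
  move=> f; apply: functional_extensionality_dep => i.
  apply: functional_extensionality_dep => -[j hj] /=.
  exact: (@dep_ord_eq i (fun j => T (h j i)) (f i) j).
move=> g; apply: functional_extensionality_dep => -[[[jv hjv] i] hji] /=.
have E : forall (p1 : (jv < n)%N) (q1 : (jv < i)%N),
    g (exist (fun p : 'I_n * 'I_n => (p.1 < p.2)%N) (Ordinal p1, i) q1) =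
    g (exist (fun p : 'I_n * 'I_n => (p.1 < p.2)%N) (Ordinal hjv, i) hji).
  by move=> p1 q1; rewrite (bool_irrelevance p1 hjv) (bool_irrelevance q1 hji).
exact: E.
Qed.

Lemma sum_tail (f : nat -> nat) n i : (forall k, (n <= k)%N -> f k = 0%N) -> (n <= i)%N ->
  (\sum_(k < i) f k = \sum_(k < n) f k)%N.
Proof.
move=> hf /subnKC <-; elim: (i - n)%N => [|t IH]; first by rewrite addn0.
by rewrite addnS big_ord_recr /= IH hf ?leq_addr // addn0.
Qed.

Lemma sumS (f : nat -> nat) j : (\sum_(k < j.+1) f k = \sum_(k < j) f k + f j)%N.
Proof. by rewrite big_ord_recr. Qed.

Lemma sum_tel (f : nat -> nat) j : (\sum_(k < j) f k + f j = f 0%N + \sum_(k < j) f k.+1)%N.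
Proof. transitivity (\sum_(k < j.+1) f k)%N; first by rewrite big_ord_recr. by rewrite big_ord_recl. Qed.

Lemma mono_lam (lam : nat -> nat) : (forall i, (lam i.+1 <= lam i)%N) ->
  forall i j, (i <= j)%N -> (lam j <= lam i)%N.
Proof.
move=> h i j /subnKC <-; elim: (j - i)%N => [|t IH]; first by rewrite addn0.
by rewrite addnS (leq_trans (h _)).
Qed.

Theorem lemma5p7 (F : fieldType) (n : nat) (lam mu : nat -> nat) (N : 'M[F]_n)
  (hlam : is_partition lam) (hmu : is_partition mu)
  (hstrip : forall i : nat, (lam i.+1 <= mu i <= lam i)%N)
  (hnil : exists k : nat, N ^+ k = 0)
  (hJF : JF N lam) :
  exists f : SubspSet N mu -> ProdSet F n lam mu, bijective f.
Proof.
have hK : forall i, \rank (kermx (N ^+ i)) = (\sum_(k < i) lam k)%N by move=> i; rewrite hJF.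
have hmono := mono_lam hlam.1.
have [rN l0n] : \rank N = (n - lam 0)%N /\ (lam 0 <= n)%N.
  have := hK 1%N; rewrite big_ord1 mxrank_ker expr1 => /= e.
  have := rank_leq_col N; lia.
have lamn : lam n = 0%N.
  apply/eqP; rewrite -leqn0 leqNgt; apply/negP => hpos.
  have h1 : (n.+1 <= \sum_(k < n.+1) lam k)%N.
    have : (\sum_(k < n.+1) 1 <= \sum_(k < n.+1) lam k)%N.
      by apply: leq_sum => k _; apply: leq_trans hpos (hmono _ _ _); rewrite -ltnS.
    by rewrite sum_nat_const card_ord muln1.
  by have := rank_leq_col (kermx (N ^+ n.+1)); rewrite hK; lia.
have lam0 : forall k, (n <= k)%N -> lam k = 0%N.
  by move=> k hk; apply/eqP; rewrite -leqn0 -lamn hmono.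
have mu0 : forall k, (n <= k)%N -> mu k = 0%N.
  by move=> k hk; have := lam0 k hk; have := hstrip k; lia.
have hle : forall j, (lam j.+1 <= lam j <= n)%N.
  move=> j; rewrite hmono //=; apply: leq_trans l0n; exact: hmono.
have hcap : forall j, \rank (kermx (N ^+ j) :&: N) = (\sum_(k < j) lam k.+1)%N.
  by move=> j; have := rank_capKN N j; rewrite !hK big_ord1 sumS sum_tel => e; apply/eqP; rewrite -(eqn_add2r (lam 0%N)) e addnC.
have hmod : forall V : 'M[F]_n, (N <= V)%MS -> forall j,
    (\rank (V :&: Gm N j) + \sum_(k < j) lam k.+1 = \rank (V :&: kermx (N ^+ j)) + (n - lam 0))%N.
  by move=> V sNV j; rewrite -hcap -rN; apply: rank_mod.
have hc : forall j, (cc n lam mu j + \sum_(k < j) lam k.+1 = \sum_(k < j) mu k + (n - lam 0))%N.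
  elim=> [|j IH]; first by rewrite /cc !big_ord0; lia.
  rewrite ccS (sumS (fun k => lam k.+1)) sumS; have := hstrip j; lia.
have hrank : forall j, \rank (Gm N j) = (n - lam j)%N.
  move=> j; have := hmod 1%:M (submx1 _) j; rewrite !cap1mx hK.
  have := sum_tel lam j; have := hle j; have := hmono 0%N j isT; lia.
have hce : forall j, (cc n lam mu j + ee lam mu j)%N = (n - lam j)%N.
  elim=> [|j IH]; first by rewrite /cc /ee !big_ord0; lia.
  rewrite ccS /ee (sumS (fun k => (lam k - mu k)%N)); rewrite /ee in IH.
  have := hstrip j; have := hle j; lia.
have chain : forall i, equip {V | SP N lam mu i V} (forall j : 'I_i, Xf F lam mu j).
  elim=> [|i IH].
    have SP0 : SP N lam mu 0 <<N>>%MS.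
      split; first by rewrite /is_subspace genmx_id.
      split.
      - by rewrite genmxE NGm.
      - by rewrite genmxE.
      - move=> j; rewrite leqn0 => /eqP ->; rewrite /cc big_ord0 addn0 -rN.
        apply/eqmx_rank/eqmxP; apply: eqmx_trans (genmxE _).
        by apply/capmx_idPl; rewrite genmxE NGm.
    have f0 : forall j : 'I_0, Xf F lam mu j by case.
    apply: (equip_single (a := exist _ _ SP0) (b := f0)); last by move=> y; apply: pi0_single.
    case=> V [sV [sVG sNV hr]]; apply: sig_eq => /=.
    have rV : \rank V = \rank N.
      have e0 : cc n lam mu 0 = (n - lam 0)%N by rewrite /cc big_ord0 addn0.
      rewrite rN -e0 -(hr 0%N (leqnn _)).
      by apply/eqmx_rank/eqmxP; apply: eqmx_sym; apply/capmx_idPl.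
    move/eqP: sV => <-; apply/genmxP; apply/eqmxP; apply: eqmx_sym; apply/eqmxP.
    by rewrite -(mxrank_leqif_eq sNV).2 rV.
  apply: equip_trans (step i hrank hle hce) _.
  apply: equip_trans _ (equip_sym (equip_pi_last i (Xf F lam mu))).
  exact: equip_prod IH (equip_refl _).
have hKn : forall i, (n <= i)%N -> (kermx (N ^+ i) :=: kermx (N ^+ n))%MS.
  move=> i hi; apply: eqmx_sym; apply/eqmxP.
  by rewrite -(mxrank_leqif_eq (kerS N hi)).2 !hK (sum_tail lam0 hi).
have hequiv : forall V : 'M[F]_n, (N <= V)%MS -> forall j,
    (\rank (V :&: Gm N j) = cc n lam mu j <-> \rank (V :&: kermx (N ^+ j)) = \sum_(k < j) mu k)%N.
  move=> V sNV j; have := hmod V sNV j; have := hc j; lia.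
have Gfull : forall V : 'M[F]_n, (V <= Gm N n)%MS.
  move=> V; apply: submx_full; rewrite /row_full hrank lamn subn0 //.
have top : equip {V | SP N lam mu n V} (SubspSet N mu).
  apply: equip_sig_iff => V; split.
    case=> sV [_ sNV hr]; split=> //; split=> // i.
    case: (leqP i n) => hi.
      by apply/esym/(hequiv V sNV i); apply: hr.
    rewrite (sum_tail mu0 (ltnW hi)).
    have -> : \rank (V :&: kermx (N ^+ i)) = \rank (V :&: kermx (N ^+ n)).
      by apply/eqmx_rank/eqmxP; apply: cap_eqmx => //; apply: hKn; apply: ltnW.
    by apply/esym/(hequiv V sNV n); apply: hr.
  case=> sV [sNV hJ]; split=> //; split=> // j hj.
  by apply/(hequiv V sNV j); rewrite hJ.
apply: equip_trans (equip_sym top) _.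
apply: equip_trans (chain n) _.
rewrite /ProdSet /Xf.
apply: equip_trans (equip_pi_prod _ _) _.
apply: equip_trans (equip_prodC _ _) _.
apply: equip_prod; last exact: equip_refl.
apply: equip_trans _ (@equip_pairs n (fun j i => ((lam j - mu j) * (mu i - lam i.+1))%N) (fun m => 'rV[F]_m)).
apply: equip_pi => i.
exact: (@equip_rV_sum F (mu i - lam i.+1) (fun k => (lam k - mu k)%N) i).
Qed.
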